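(* For any graph $G$, $|\mathcal{O}(G)|\le \Phi(G)$, where $\mathcal{O}(G)$ is the LC orbit of $G$ and $\Phi(G)$ is the number of graphs QASST equivalent to $G$.
   Context: Graphs are finite, simple, connected, with a fixed labelled vertex set. The local complement $c_v(G)$ replaces the induced subgraph on the neighbourhood of $v$ by its complement. $\mathcal{O}(G)$ is the set of all graphs on $V(G)$ obtainable from $G$ by finite sequences of local complements (distinct edge sets are counted as distinct graphs). Splits, strong splits and the split decomposition: a split is a bipartition $V=A\sqcup B$ with the $A$–$B$ edges forming a complete bipartite graph between the vertices having neighbours across; it is strong if no other split crosses it (each side of one meeting each side of the other). Cutting along all nontrivial strong splits (replacing each side by itself plus a new paired marker vertex, a split-node, adjacent to the vertices having neighbours across) yields a tree (the strong split tree) whose nodes are labelled by quotient graphs. Two graphs on the same vertex set are QASST equivalent if they have the same strong splits (hence the same strong split tree and corresponding quotient graphs on the same vertex sets) and each quotient graph of one is locally equivalent to the corresponding quotient graph of the other. *)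

(* Defs.v *)
From mathcomp Require Import all_boot.
Set Implicit Arguments. Unset Strict Implicit. Unset Printing Implicit Defensive.

Section Graphs.
Variable T : finType.

Definition graph := {ffun T -> {set T}}.

Definition adj (G : graph) (x y : T) : bool := y \in G x.

Definition simple_graph (G : graph) : bool :=
  [forall x, x \notin G x] && [forall x, forall y, (y \in G x) == (x \in G y)].

Definition connected_graph (G : graph) : bool :=
  [forall x, forall y, connect (adj G) x y].

Definition local_complement (v : T) (G : graph) : graph :=
  [ffun x => [set y | if [&& x \in G v, y \in G v & x != y]
                      then y \notin G x else y \in G x]].

Definition lc_step : rel graph := fun G H => [exists v, H == local_complement v G].

Definition LC_orbit (G : graph) : {set graph} := [set H | connect lc_step G H].

Definition locally_equivalent (G H : graph) : bool := connect lc_step G H.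

Definition frontier (G : graph) (A : {set T}) : {set T} :=
  [set x in A | [exists y in ~: A, adj G x y]].

Definition is_split (G : graph) (A : {set T}) : bool :=
  [&& A != set0, ~: A != set0 &
      [forall x in frontier G A, forall y in frontier G (~: A), adj G x y]].

Definition crossing (A B : {set T}) : bool :=
  [&& A :&: B != set0, A :&: ~: B != set0, ~: A :&: B != set0 & ~: A :&: ~: B != set0].

Definition strong_split (G : graph) (A : {set T}) : bool :=
  is_split G A && [forall B, is_split G B ==> ~~ crossing A B].

(* Partitions of V arising at the nodes of the strong split tree: every part
   (the leaf set behind a marker vertex, or a single original vertex) is a side
   of a (possibly trivial) strong split, and every strong split has a side
   inside one part.  (This also admits the 2-part partitions {A, V\A} for
   strong splits A, whose quotient is K2 for both graphs, hence harmless.) *)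
Definition node_partition (G : graph) (P : {set {set T}}) : bool :=
  [&& partition P [set: T],
      [forall X in P, strong_split G X] &
      [forall A, strong_split G A ==>
         [exists X in P, (A \subset X) || (~: A \subset X)]]].

(* quotient graph at a node: vertices are the parts (marker vertices are
   identified with the leaf set behind them), two parts adjacent iff G has an
   edge between them. Parts outside P are isolated dummy vertices. *)
Definition quotient_graph (G : graph) (P : {set {set T}}) : {ffun {set T} -> {set {set T}}} :=
  [ffun X => [set Y | [&& X \in P, Y \in P, X != Y &
                         [exists x in X, exists y in Y, adj G x y]]]].

End Graphs.

Definition QASST (T : finType) (G H : graph T) : bool :=
  [forall A : {set T}, strong_split G A == strong_split H A] &&
  [forall P : {set {set T}}, node_partition G P ==>
       locally_equivalent (quotient_graph G P) (quotient_graph H P)].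

Definition Phi (T : finType) (G : graph T) : nat :=
  #|[set H : graph T | [&& simple_graph H, connected_graph H & QASST G H]]|.

(* Main.v *)
Require Import Defs.
From mathcomp Require Import all_boot.
Set Implicit Arguments. Unset Strict Implicit. Unset Printing Implicit Defensive.

Lemma simpleP (T : finType) (K : graph T) : simple_graph K ->
  (forall x, x \notin K x) /\ (forall x y, (y \in K x) = (x \in K y)).
Proof.
case/andP => /forallP H1 /forallP H2; split => // x y; exact/eqP/(forallP (H2 x) y).
Qed.

Lemma lcE (T : finType) (K : graph T) v x y : (y \in local_complement v K x) =
  if [&& x \in K v, y \in K v & x != y] then y \notin K x else y \in K x.
Proof. by rewrite /local_complement ffunE inE. Qed.

Lemma lc_simple (T : finType) (K : graph T) v :
  simple_graph K -> simple_graph (local_complement v K).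
Proof.
move=> /simpleP [irr sym]; apply/andP; split; apply/forallP => x.
  by rewrite lcE eqxx !andbF; exact: irr.
apply/forallP => y; apply/eqP; rewrite !lcE [y == x]eq_sym (sym x y).
by case: (x \in K v); case: (y \in K v).
Qed.

Lemma lc_invol (T : finType) (K : graph T) v :
  simple_graph K -> local_complement v (local_complement v K) = K.
Proof.
move=> /simpleP [irr sym].
have Hv : forall y, (y \in local_complement v K v) = (y \in K v).
  by move=> y; rewrite lcE (negbTE (irr v)).
apply/ffunP => x; apply/setP => y.
rewrite lcE !Hv lcE.
by case: ifP => ->; rewrite ?negbK.
Qed.

Lemma lc_connected (T : finType) (K : graph T) v :
  simple_graph K -> connected_graph K -> connected_graph (local_complement v K).
Proof.
move=> sK cK; have [irr sym] := simpleP sK.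
apply/forallP=> x; apply/forallP=> y.
have := forallP (forallP cK x) y; apply: connect_sub => a b /= Hab.
case E: [&& a \in K v, b \in K v & a != b].
  case/and3P: E => Ha Hb _; apply: (connect_trans (y:=v)); apply: connect1;
  rewrite /adj lcE.
    by rewrite (negbTE (irr v)) andbF -sym.
  by rewrite (negbTE (irr v)).
by apply: connect1; rewrite /adj lcE E.
Qed.

Lemma split_rect (T : finType) (K : graph T) A a1 a2 b1 b2 :
  simple_graph K -> is_split K A -> a1 \in A -> a2 \in A -> b1 \notin A ->
  b2 \notin A -> adj K a1 b2 -> adj K a2 b1 -> adj K a1 b1.
Proof.
move=> /simpleP[_ sym] /and3P[_ _ /forall_inP H] a1A a2A b1A b2A h1 h2.
apply: (forall_inP (H a1 _)).
  by rewrite inE a1A /=; apply/exists_inP; exists b2; rewrite ?inE.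
rewrite inE inE b1A /=; apply/exists_inP; exists a2; rewrite ?setCK //.
by rewrite /adj sym.
Qed.

Lemma lc_split1 (T : finType) (K : graph T) v A :
  simple_graph K -> is_split K A -> is_split (local_complement v K) A.
Proof.
move=> sK sp; have [irr sym] := simpleP sK.
have R := fun a1 a2 b1 b2 => @split_rect T K A a1 a2 b1 b2 sK sp.
case/and3P: (sp) => A0 CA0 _; apply/and3P; split=> //.
apply/forall_inP => x; rewrite inE => /andP[xA /exists_inP[y' y'A xy']].
apply/forall_inP => y; rewrite inE => /andP[yA /exists_inP[x' x'A yx']].
rewrite inE in yA y'A; rewrite setCK in x'A.
have ne : forall a b, a \in A -> b \notin A -> (a != b).
  by move=> a b aA bA; apply: contraNneq bA => <-.
have {}y'A : y' \notin A by move: y'A; rewrite inE.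
move: xy' yx'; rewrite /adj !lcE (ne x y') // (ne x y) // [y == x']eq_sym (ne x' y) //.
rewrite !andbT (sym y x') [(y \in K v) && _]andbC.
case: (boolP (v \in A)) => vA.
  rewrite /adj in R.
    move: (R x x y y xA xA yA yA).
    move: (R x x y y' xA xA yA y'A).
    move: (R x x y' y xA xA y'A yA).
    move: (R x x y' y' xA xA y'A y'A).
    move: (R x x' y y xA x'A yA yA).
    move: (R x x' y y' xA x'A yA y'A).
    move: (R x x' y' y xA x'A y'A yA).
    move: (R x x' y' y' xA x'A y'A y'A).
    move: (R x v y y xA vA yA yA).
    move: (R x v y y' xA vA yA y'A).
    move: (R x v y' y xA vA y'A yA).
    move: (R x v y' y' xA vA y'A y'A).
    move: (R x' x y y x'A xA yA yA).
    move: (R x' x y y' x'A xA yA y'A).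
    move: (R x' x y' y x'A xA y'A yA).
    move: (R x' x y' y' x'A xA y'A y'A).
    move: (R x' x' y y x'A x'A yA yA).
    move: (R x' x' y y' x'A x'A yA y'A).
    move: (R x' x' y' y x'A x'A y'A yA).
    move: (R x' x' y' y' x'A x'A y'A y'A).
    move: (R x' v y y x'A vA yA yA).
    move: (R x' v y y' x'A vA yA y'A).
    move: (R x' v y' y x'A vA y'A yA).
    move: (R x' v y' y' x'A vA y'A y'A).
    move: (R v x y y vA xA yA yA).
    move: (R v x y y' vA xA yA y'A).
    move: (R v x y' y vA xA y'A yA).
    move: (R v x y' y' vA xA y'A y'A).
    move: (R v x' y y vA x'A yA yA).
    move: (R v x' y y' vA x'A yA y'A).
    move: (R v x' y' y vA x'A y'A yA).
    move: (R v x' y' y' vA x'A y'A y'A).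
    move: (R v v y y vA vA yA yA).
    move: (R v v y y' vA vA yA y'A).
    move: (R v v y' y vA vA y'A yA).
    move: (R v v y' y' vA vA y'A y'A).
  by case: (y \in K x); case: (y' \in K x); case: (y \in K x'); case: (y' \in K x');
     case: (y \in K v); case: (y' \in K v); case: (x \in K v); case: (x' \in K v).
rewrite /adj in R; rewrite (sym v x) (sym v x').
    move: (R x x y y xA xA yA yA).
    move: (R x x y y' xA xA yA y'A).
    move: (R x x y v xA xA yA vA).
    move: (R x x y' y xA xA y'A yA).
    move: (R x x y' y' xA xA y'A y'A).
    move: (R x x y' v xA xA y'A vA).
    move: (R x x v y xA xA vA yA).
    move: (R x x v y' xA xA vA y'A).
    move: (R x x v v xA xA vA vA).
    move: (R x x' y y xA x'A yA yA).
    move: (R x x' y y' xA x'A yA y'A).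
    move: (R x x' y v xA x'A yA vA).
    move: (R x x' y' y xA x'A y'A yA).
    move: (R x x' y' y' xA x'A y'A y'A).
    move: (R x x' y' v xA x'A y'A vA).
    move: (R x x' v y xA x'A vA yA).
    move: (R x x' v y' xA x'A vA y'A).
    move: (R x x' v v xA x'A vA vA).
    move: (R x' x y y x'A xA yA yA).
    move: (R x' x y y' x'A xA yA y'A).
    move: (R x' x y v x'A xA yA vA).
    move: (R x' x y' y x'A xA y'A yA).
    move: (R x' x y' y' x'A xA y'A y'A).
    move: (R x' x y' v x'A xA y'A vA).
    move: (R x' x v y x'A xA vA yA).
    move: (R x' x v y' x'A xA vA y'A).
    move: (R x' x v v x'A xA vA vA).
    move: (R x' x' y y x'A x'A yA yA).
    move: (R x' x' y y' x'A x'A yA y'A).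
    move: (R x' x' y v x'A x'A yA vA).
    move: (R x' x' y' y x'A x'A y'A yA).
    move: (R x' x' y' y' x'A x'A y'A y'A).
    move: (R x' x' y' v x'A x'A y'A vA).
    move: (R x' x' v y x'A x'A vA yA).
    move: (R x' x' v y' x'A x'A vA y'A).
    move: (R x' x' v v x'A x'A vA vA).
by case: (y \in K x); case: (y' \in K x); case: (y \in K x'); case: (y' \in K x');
   case: (y \in K v); case: (y' \in K v); case: (v \in K x); case: (v \in K x').
Qed.

Lemma lc_split (T : finType) (K : graph T) v A :
  simple_graph K -> is_split (local_complement v K) A = is_split K A.
Proof.
move=> sK; apply/idP/idP; last exact: lc_split1.
move=> h; rewrite -(lc_invol v sK); apply: lc_split1 => //; exact: lc_simple.
Qed.

Definition EE (T : finType) (K : graph T) (Y Z : {set T}) :=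
  [exists x in Y, exists y in Z, adj K x y].

Lemma qE (T : finType) (K : graph T) (P : {set {set T}}) (Y Z : {set T}) :
  (Z \in quotient_graph K P Y) = [&& Y \in P, Z \in P, Y != Z & EE K Y Z].
Proof. by rewrite /quotient_graph ffunE inE. Qed.

Lemma EE_ext (T : finType) (K1 K2 : graph T) (Y Z : {set T}) :
  (forall y z, y \in Y -> z \in Z -> adj K1 y z = adj K2 y z) -> EE K1 Y Z = EE K2 Y Z.
Proof.
move=> H; apply/exists_inP/exists_inP => -[y yY /exists_inP[z zZ h]];
  exists y => //; apply/exists_inP; exists z => //; by rewrite ?H // -H.
Qed.

Lemma EE_sym (T : finType) (K : graph T) (Y Z : {set T}) : simple_graph K -> EE K Y Z = EE K Z Y.
Proof.
move=> /simpleP[_ sym].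
apply/exists_inP/exists_inP => -[y yY /exists_inP[z zZ h]];
  exists z => //; apply/exists_inP; exists y => //; by rewrite /adj sym.
Qed.

Lemma lc_quot (T : finType) (K : graph T) v (P : {set {set T}}) :
  simple_graph K -> partition P [set: T] -> (forall X, X \in P -> is_split K X) ->
  quotient_graph (local_complement v K) P =
  (if [exists y in ~: pblock P v, adj K v y]
   then local_complement (pblock P v) (quotient_graph K P)
   else quotient_graph K P).
Proof.
move=> sK /and3P[/eqP cov triv _] spl; have [irr sym] := simpleP sK.
set X := pblock P v.
have vX : v \in X by rewrite mem_pblock cov inE.
have XP : X \in P by apply: pblock_mem; rewrite cov inE.
have disj : forall Y Z y, Y \in P -> Z \in P -> y \in Y -> y \in Z -> Y = Z.
  by move=> Y Z y YP ZP yY yZ; rewrite -(def_pblock triv YP yY) -(def_pblock triv ZP yZ).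
have notin : forall Y Z y, Y \in P -> Z \in P -> Y != Z -> y \in Y -> y \notin Z.
  by move=> Y Z y YP ZP YZ yY; apply/negP => yZ; rewrite (disj Y Z y) ?eqxx in YZ.
have nepart : forall Y Z y z, Y \in P -> Z \in P -> Y != Z -> y \in Y -> z \in Z -> y != z.
  move=> Y Z y z YP ZP YZ yY zZ; apply/eqP => E; subst z.
  by rewrite (disj Y Z y) ?eqxx in YZ.
have adjC : forall a b, adj K a b = adj K b a by move=> a b; rewrite /adj sym.
have lcadj : forall a b, a != b -> adj (local_complement v K) a b =
    if (a \in K v) && (b \in K v) then ~~ adj K a b else adj K a b.
  by move=> a b ab; rewrite /adj lcE ab andbT.
case: ifP => [/exists_inP[b0 b0X vb0]|nc].
  rewrite inE in b0X.
  have hb : forall Z, Z \in P -> X != Z -> EE (local_complement v K) X Z = EE K X Z.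
    move=> Z ZP XZ; apply/idP/idP.
      case/exists_inP=> x xX /exists_inP[z zZ].
      rewrite lcadj ?(nepart X Z) //; case: ifP => [/andP[_ zv] _| _ h];
        apply/exists_inP; [exists v|exists x] => //; apply/exists_inP; exists z => //.
    case/exists_inP=> x xX /exists_inP[z zZ xz].
    apply/exists_inP; exists v => //; apply/exists_inP; exists z => //.
    rewrite lcadj ?(nepart X Z) // (negbTE (irr v)) /=.
    exact: (split_rect sK (spl X XP) vX xX (notin Z X z ZP XP ltac:(by rewrite eq_sym) zZ) b0X vb0 xz).
  have hc : forall Y Z, Y \in P -> Z \in P -> Y != Z -> X != Y -> ~~ EE K X Y ->
      EE (local_complement v K) Y Z = EE K Y Z.
    move=> Y Z YP ZP YZ XY nXY; apply: EE_ext => y z yY zZ.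
    rewrite lcadj ?(nepart Y Z) //.
    have -> : y \in K v = false.
      apply/negP => yv; apply: (negP nXY); apply/exists_inP; exists v => //.
      by apply/exists_inP; exists y.
    by [].
  have hd : forall Y Z, Y \in P -> Z \in P -> Y != Z -> X != Y -> X != Z ->
      EE K X Y -> EE K X Z -> EE (local_complement v K) Y Z = ~~ EE K Y Z.
    move=> Y Z YP ZP YZ XY XZ eY eZ.
    have nv : forall W, W \in P -> X != W -> EE K X W -> exists2 w, w \in W & w \in K v.
      move=> W WP XW /exists_inP[x xX /exists_inP[w wW xw]]; exists w => //.
      exact: (split_rect sK (spl X XP) vX xX (notin W X w WP XP ltac:(by rewrite eq_sym) wW) b0X vb0 xw).
    have [y0 y0Y y0v] := nv Y YP XY eY.
    have [z0 z0Z z0v] := nv Z ZP XZ eZ.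
    have vY : v \notin Y by apply: (notin X Y).
    have vZ : v \notin Z by apply: (notin X Z).
    case: (boolP (EE K Y Z)) => e /=.
      case/exists_inP: (e) => y1 y1Y /exists_inP[z1 z1Z y1z1].
      apply/exists_inP => -[y yY /exists_inP[z zZ]].
      rewrite lcadj ?(nepart Y Z) //.
      case: ifP => [/andP[yv zv]|nyz].
        move/negP; apply.
        have h1 : adj K y1 z.
          rewrite adjC; apply: (split_rect sK (spl Z ZP) zZ z1Z (notin Y Z y1 YP ZP YZ y1Y) vZ).
            by rewrite adjC.
          by rewrite adjC.
        apply: (split_rect sK (spl Y YP) yY y1Y (notin Z Y z ZP YP ltac:(by rewrite eq_sym) zZ) vY) => //.
        by rewrite adjC.
      move=> yz; case yv: (y \in K v); rewrite yv /= in nyz.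
        move/negP: nyz; apply.
        rewrite -[_ \in _]/(adj K v z) adjC.
        apply: (split_rect sK (spl Z ZP) zZ z0Z vZ (notin Y Z y YP ZP YZ yY)).
          by rewrite adjC.
        by rewrite adjC.
      move/negP: yv; apply.
      rewrite -[_ \in _]/(adj K v y) adjC.
      apply: (split_rect sK (spl Y YP) yY y0Y vY (notin Z Y z ZP YP ltac:(by rewrite eq_sym) zZ)) => //.
      by rewrite adjC.
    apply/exists_inP; exists y0 => //; apply/exists_inP; exists z0 => //.
    rewrite lcadj ?(nepart Y Z) // y0v z0v /=.
    apply/negP => h; move/negP: e; apply; apply/exists_inP; exists y0 => //.
    by apply/exists_inP; exists z0.
  apply/ffunP => Y; apply/setP => Z; rewrite lcE !qE XP /=.
  case: (boolP (Y \in P)) => YP //=.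
  case: (boolP (Z \in P)) => ZP //=; last by rewrite andbF.
  case: (eqVneq Y Z) => [<-|YZ] /=; first by rewrite !andbF.
  case: (eqVneq X Y) => [XY|XY] /=; first by rewrite -XY in YZ *; rewrite hb.
  rewrite andbT.
  case: (eqVneq X Z) => [XZ|XZ] /=.
    rewrite -XZ in YZ *; rewrite andbF /=.
    by rewrite (@EE_sym _ _ Y X (lc_simple v sK)) (hb Y YP XY) (@EE_sym _ K X Y sK).
  case eY: (EE K X Y); case eZ: (EE K X Z) => /=.
  - exact: hd.
  - rewrite (@EE_sym _ _ Y Z (lc_simple v sK)) (hc Z Y) ?eZ //; last by rewrite eq_sym.
    exact: (@EE_sym _ K Z Y sK).
  - by rewrite hc ?eY.
  - by rewrite hc ?eY.
have inX : forall w, w \in K v -> w \in X.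
  move=> w wv; apply/negPn/negP => wX.
  have : [exists y in ~: X, adj K v y] by apply/exists_inP; exists w; rewrite ?inE.
  by rewrite nc.
apply/ffunP => Y; apply/setP => Z; rewrite !qE.
case: (boolP (Y \in P)) => YP //=.
case: (boolP (Z \in P)) => ZP //=.
case: (eqVneq Y Z) => [<-|YZ] //=.
apply: EE_ext => y z yY zZ; rewrite lcadj ?(nepart Y Z) //.
case: ifP => // /andP[/inX yX /inX zX].
by rewrite (disj Y X y) // (disj Z X z) ?eqxx in YZ.
Qed.

Definition Inv (T : finType) (G H : graph T) : Prop :=
  [/\ simple_graph H, connected_graph H, (forall A, is_split H A = is_split G A) &
      (forall P, node_partition G P ->
         connect (@lc_step _) (quotient_graph G P) (quotient_graph H P))].

Lemma Inv_step (T : finType) (G H H' : graph T) :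
  Inv G H -> lc_step H H' -> Inv G H'.
Proof.
case=> sH cH spH qH /existsP[v /eqP ->]; split.
- exact: lc_simple.
- exact: lc_connected.
- by move=> A; rewrite lc_split // spH.
move=> P nP; have := qH P nP; move: (nP) => /and3P[pP /forall_inP sP _] c.
have spl : forall X, X \in P -> is_split H X.
  by move=> X XP; rewrite spH; case/andP: (sP X XP).
rewrite (lc_quot v sH pP spl); case: ifP => // _.
apply: (connect_trans c); apply: connect1; apply/existsP; exists (pblock P v).
by [].
Qed.

Theorem corollary2 (T : finType) (G : graph T) :
  simple_graph G -> connected_graph G -> #|LC_orbit G| <= Phi G.
Proof.
move=> sG cG; rewrite /Phi; apply: subset_leq_card; apply/subsetP => H.
rewrite !inE => /connectP[p pth ->].
have : Inv G (last G p).
  elim/last_ind: p pth => [|p x IH]; first by split.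
  rewrite rcons_path last_rcons => /andP[pth st].
  exact: (Inv_step (IH pth) st).
case=> sH cH spH qH; rewrite sH cH /=; apply/andP; split.
  apply/forallP => A; apply/eqP; rewrite /strong_split spH; congr (_ && _).
  by apply: eq_forallb => B; rewrite spH.
by apply/forall_inP => P nP; apply: qH.
Qed.
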